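(* Let $p_0\in\mathbb{N}$, $z\in\tilde{\mathcal{A}}_{conv.}$ and $X:=a^{p_0}+bz\in\tilde{\mathcal{A}}_{conv.}$. If $U\in\widehat{\mathcal{A}}$ is such that $UX\in\tilde{\mathcal{A}}_{conv.}$, then $U\in\tilde{\mathcal{A}}_{conv.}$.
   Context: $\widehat{\mathcal{A}}$ is the algebra of formal power series $\sum_{p,q\ge0}\gamma_{p,q}a^pb^q$ in variables $a,b$ with $ab-ba=b^2$ (the $(a,b)$-adic completion of the polynomial algebra with this relation). $\tilde{\mathcal{A}}_{conv.}\subset\widehat{\mathcal{A}}$ is the subalgebra of series with $|\gamma_{p,q}|\le C_RR^{p+q}q!$ for some $R>1$, $C_R>0$. *)

(* Defs.v *)
From HB Require Import structures.
From mathcomp Require Import all_boot all_order all_algebra.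
From mathcomp Require Import reals.
From mathcomp Require Import complex.
Set Implicit Arguments. Unset Strict Implicit. Unset Printing Implicit Defensive.
Import Order.TTheory GRing.Theory Num.Theory.
Local Open Scope ring_scope.

(* An element of \hat A is represented by its normal-ordered coefficients:
   F p q = gamma_{p,q}, the coefficient of a^p b^q. *)
Definition series (R : realType) := nat -> nat -> R[i].

Section Alg.
Variable R : realType.
Local Notation C := (R[i]).

(* Normal ordering: reord q r i j = coefficient of a^i b^j in b^q a^r,
   computed from b^q a^{r+1} = (b^q a^r) a and b^j a = a b^j - j b^{j+1}. *)
Fixpoint reord (q r : nat) : nat -> nat -> C :=
  match r with
  | 0 => fun i j => ((i == 0%N) && (j == q))%:R
  | r'.+1 => fun i j =>
      (if i is i'.+1 then reord q r' i' j else 0)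
      - (if j is j'.+1 then j'%:R * reord q r' i j' else 0)
  end.

Definition mono (p0 q0 : nat) : series R :=
  fun p q => ((p == p0) && (q == q0))%:R.

Definition sadd (F G : series R) : series R := fun p q => F p q + G p q.

(* product: (sum F_{p,q} a^p b^q)(sum G_{r,s} a^r b^s)
   = sum F_{p,q} G_{r,s} a^p (b^q a^r) b^s *)
Definition smul (F G : series R) : series R := fun m n =>
  \sum_(p < m.+1) \sum_(s < n.+1) \sum_(q < n.+1) \sum_(r < (m + n).+1)
     F p q * G r s * reord q r (m - p) (n - s).

Definition conv (F : series R) : Prop :=
  exists Rr : R, 1 < Rr /\ exists Cr : R, 0 < Cr /\
    forall p q : nat, `|F p q| <= ((Cr * Rr ^+ (p + q) * (q`!)%:R)%:C)%C.
End Alg.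

(* Main.v *)
Require Import Defs.
From HB Require Import structures.
From mathcomp Require Import all_boot all_order all_algebra.
From mathcomp Require Import reals complex.
From mathcomp Require Import ring lra zify.
Set Implicit Arguments. Unset Strict Implicit. Unset Printing Implicit Defensive.
Import Order.TTheory GRing.Theory Num.Theory.
Local Open Scope ring_scope.

Section S.
Variable R : realType.
Local Notation C := (R[i]).
Definition nr (x : C) : R := Normc.normc x.
Arguments nr : simpl never.
Lemma nrE (x : C) : `|x| = ((nr x)%:C)%C.
Proof. by []. Qed.
Lemma nr_ge0 x : 0 <= nr x.
Proof. by case: x => a b; rewrite /nr /= sqrtr_ge0. Qed.
Lemma nrD x y : nr (x + y) <= nr x + nr y.
Proof. exact: le_normcD. Qed.
Lemma nrM x y : nr (x * y) = nr x * nr y.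
Proof. exact: Normc.normcM. Qed.
Lemma nrN x : nr (- x) = nr x.
Proof. exact: normcN. Qed.
Lemma nr0 : nr 0 = 0.
Proof. exact: Normc.normc0. Qed.
Lemma nrn n : nr n%:R = n%:R.
Proof. by rewrite /nr normcMn Normc.normc1. Qed.
Lemma nrB x y : nr (x - y) <= nr x + nr y.
Proof. by rewrite -(nrN y) nrD. Qed.
Lemma nr_sum (I : Type) (s : seq I) (P : pred I) (F : I -> C) :
  nr (\sum_(i <- s | P i) F i) <= \sum_(i <- s | P i) nr (F i).
Proof.
apply: (big_ind2 (fun x y => nr x <= y)); first by rewrite nr0.
by move=> x1 y1 x2 y2 h1 h2; apply: le_trans (nrD _ _) _; apply: lerD.
by [].
Qed.

Lemma reord_supp q r i j : reord R q r i j != 0 ->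
  [/\ (i <= r)%N, (q <= j)%N & (i + j = q + r)%N].
Proof.
elim: r i j => [|r IH] i j /=.
  case: i => [|i]; case: (j =P q) => [->|hj] //=; rewrite ?eqxx ?andbF //.
  by move=> _; split; lia.
set A := (if i is _.+1 then _ else _); set B := (if j is _.+1 then _ else _).
move=> h; have : (A != 0) || (B != 0).
  apply: contraR h; rewrite negb_or !negbK => /andP[/eqP -> /eqP ->].
  by rewrite subr0.
case/orP; rewrite /A /B.
  case: i {A B h} => [|i]; first by rewrite eqxx.
  by move/IH => [h1 h2 h3]; split; lia.
case: j {A B h} => [|j]; first by rewrite eqxx.
by rewrite mulf_eq0 negb_or => /andP[_ /IH [h1 h2 h3]]; split; lia.
Qed.

Lemma reord_diag q r i : reord R q r i q = (i == r)%:R.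
Proof.
elim: r i => [|r IH] i /=; first by rewrite eqxx andbT.
have -> : (if q is j.+1 then j%:R * reord R q r i j else 0) = 0.
  case: q IH => [|j] IH //.
  have [->|/reord_supp [_ h _]] := eqVneq (reord R j.+1 r i j) 0.
    by rewrite mulr0.
  lia.
rewrite subr0; case: i => [|i] //.
Qed.

Lemma reord_bound q r i j :
  (q`!)%:R * nr (reord R q r i j) <= ('C(r, i) * j`!)%:R.
Proof.
elim: r i j => [|r IH] i j /=.
  case: i => [|i]; case: (j =P q) => [->|hj] /=; rewrite ?nrn ?nr0 ?mulr0 //.
  by rewrite mulr1 bin0 mul1n.
have hB : (q`!)%:R * nr (if j is j'.+1 then j'%:R * reord R q r i j' else 0)
     <= ('C(r, i) * j`!)%:R.
  case: j => [|j]; first by rewrite nr0 mulr0.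
  rewrite nrM nrn mulrCA.
  apply: le_trans (_ : j%:R * ('C(r, i) * j`!)%:R <= _).
    by apply: ler_wpM2l; [exact: ler0n | exact: IH].
  rewrite -natrM ler_nat factS; nia.
apply: le_trans (_ : (q`!)%:R * (nr (if i is i'.+1 then reord R q r i' j else 0)
   + nr (if j is j'.+1 then j'%:R * reord R q r i j' else 0)) <= _).
  by apply: ler_wpM2l; [exact: ler0n | exact: nrB].
rewrite mulrDr.
case: i hB => [|i] hB.
  by rewrite nr0 mulr0 add0r bin0 (le_trans hB) // bin0.
rewrite binS mulnDl natrD [X in _ <= X]addrC; apply: lerD => //; exact: IH.
Qed.

Lemma conv_nr (F : series R) : conv F <-> exists Rr : R, 1 < Rr /\
  exists Cr : R, 0 < Cr /\ forall p q, nr (F p q) <= Cr * Rr ^+ (p + q) * (q`!)%:R.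
Proof.
rewrite /conv; split => -[Rr [hR [Cr [hC h]]]]; exists Rr; split => //;
  exists Cr; split => // p q; have := h p q; by rewrite nrE lecR.
Qed.

Lemma sum_unif n (F : 'I_n -> C) (B : R) :
  (forall i, nr (F i) <= B) -> nr (\sum_(i < n) F i) <= n%:R * B.
Proof.
move=> h; apply: le_trans (nr_sum _ _ _) _.
apply: le_trans (_ : \sum_(i < n) B <= _); first by apply: ler_sum => i _.
by rewrite sumr_const card_ord mulr_natl.
Qed.

Lemma sum_w n (F : 'I_n -> C) (c : R) (e : 'I_n -> R) :
  0 <= c -> (forall i, 0 <= e i) -> \sum_(i < n) e i <= 1 ->
  (forall i, nr (F i) <= c * e i) -> nr (\sum_(i < n) F i) <= c.
Proof.
move=> hc he hs h; apply: le_trans (nr_sum _ _ _) _.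
apply: le_trans (_ : \sum_(i < n) c * e i <= _); first by apply: ler_sum => i _.
by rewrite -mulr_sumr; rewrite -[X in _ <= X]mulr1; apply: ler_wpM2l.
Qed.

Lemma geo_eq n : \sum_(i < n) (2^-1 : R) ^+ i.+1 = 1 - 2^-1 ^+ n.
Proof.
elim: n => [|n IH]; first by rewrite big_ord0 expr0 subrr.
rewrite big_ord_recr /= IH exprS; by field.
Qed.

Lemma geo1 n : \sum_(i < n) (2^-1 : R) ^+ i.+1 <= 1.
Proof. by rewrite geo_eq gerDl oppr_le0 exprn_ge0 // invr_ge0. Qed.

Lemma geo2 n : \sum_(i < n.+1) (2^-1 : R) ^+ (n - i).+1 <= 1.
Proof.
rewrite (reindex_inj rev_ord_inj) /=.
rewrite (eq_bigr (fun i : 'I_n.+1 => (2^-1 : R) ^+ i.+1)) ?geo1 // => i _.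
by rewrite subSS subKn // -ltnS.
Qed.

Lemma geo3 n : \sum_(i < n) (2^-1 : R) ^+ (n - i) <= 1.
Proof.
case: n => [|n]; first by rewrite big_ord0.
rewrite (eq_bigr (fun i : 'I_n.+1 => (2^-1 : R) ^+ (n - i).+1)) ?geo2 // => i _.
by rewrite subSn // -ltnS.
Qed.

Lemma bin_le2 n k : ('C(n, k) <= 2 ^ n)%N.
Proof.
elim: n k => [|n IH] [|k] //; first by rewrite bin0 expn_gt0.
rewrite binS expnS; have := IH k; have := IH k.+1; lia.
Qed.

Lemma fact_split s j : (s`! * j`! <= (s + j)`!)%N.
Proof.
have := bin_fact (leq_addr j s); rewrite addKn => <-.
by rewrite leq_pmull // bin_gt0 leq_addr.
Qed.

Lemma W0 (z : series R) r : smul (mono R 0 1) z r 0 = 0.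
Proof.
rewrite /smul; apply: big1 => p _; rewrite !big_ord1; apply: big1 => r' _.
by rewrite /mono /= andbF !mul0r.
Qed.

Lemma cnt r s : ((r.+1) * ((s.+1) * ((s.+1) * (r + s).+1)) <= 8 ^ (r + s))%N.
Proof.
apply: (@leq_trans (2 ^ r * (2 ^ s * (2 ^ s * 2 ^ (r + s))))%N); last first.
  rewrite -!expnD; have -> : 8%N = (2 ^ 3)%N by [].
  rewrite -expnM; apply: leq_pexp2l => //; lia.
apply: leq_mul; first exact: ltn_expl.
apply: leq_mul; first exact: ltn_expl.
apply: leq_mul; first exact: ltn_expl.
exact: ltn_expl.
Qed.

Lemma Wbound (z : series R) (Rz Cz : R) : 1 <= Rz -> 0 <= Cz ->
  (forall p q, nr (z p q) <= Cz * Rz ^+ (p + q) * (q`!)%:R) ->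
  forall r s, nr (smul (mono R 0 1) z r s) <= Cz * (16 * Rz) ^+ (r + s) * (s`!)%:R.
Proof.
move=> hR hC hz r s.
set B := Cz * (2 * Rz) ^+ (r + s) * (s`!)%:R.
have hB0 : 0 <= B.
  by rewrite /B; apply: mulr_ge0; [apply: mulr_ge0 => //; apply: exprn_ge0; lra | exact: ler0n].
have ht : forall (p : 'I_r.+1) (s' : 'I_s.+1) (q : 'I_s.+1) (r' : 'I_(r + s).+1),
    nr (mono R 0 1 p q * z r' s' * reord R q r' (r - p) (s - s')) <= B.
  move=> p s' q r'; rewrite /mono.
  case: ((nat_of_ord p == 0%N) && (nat_of_ord q == 1%N)) /andP => [[/eqP hp /eqP hq]|_];
    last by rewrite !mul0r nr0.
  rewrite hp hq subn0 mul1r nrM.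
  have [->|/reord_supp [h1 h2 h3]] := eqVneq (reord R 1 r' r (s - s')) 0.
    by rewrite nr0 mulr0.
  have hs' : (s' <= s)%N by rewrite -ltnS.
  have hrb := reord_bound 1 r' r (s - s'); rewrite mul1r in hrb.
  apply: le_trans (ler_pM (nr_ge0 _) (nr_ge0 _) (hz r' s') hrb) _.
  have hn : (s'`! * ('C(r', r) * (s - s')`!) <= 2 ^ (r + s) * s`!)%N.
    rewrite mulnCA; apply: leq_mul.
      apply: leq_trans (bin_le2 _ _) _; apply: leq_pexp2l => //; lia.
    by have := fact_split s' (s - s'); rewrite subnKC.
  have hp' : Rz ^+ (r' + s') <= Rz ^+ (r + s) by apply: ler_weXn2l => //; lia.
  apply: le_trans (_ : Cz * (Rz ^+ (r + s) * ((2 ^ (r + s) * s`!)%N)%:R) <= _).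
    rewrite -mulrA -mulrA; apply: ler_wpM2l => //.
    rewrite -mulrA -natrM; apply: ler_pM; [apply: exprn_ge0; lra | exact: ler0n | exact: hp' | by rewrite ler_nat].
  rewrite /B natrM natrX exprMn le_eqVlt; apply/orP; left; apply/eqP; ring.
have eB : B = Cz * (2 * Rz) ^+ (r + s) * (s`!)%:R by [].
clearbody B.
rewrite /smul.
apply: le_trans (_ : (r.+1)%:R * ((s.+1)%:R * ((s.+1)%:R * ((r + s).+1%:R * B))) <= _).
  apply: sum_unif => p; apply: sum_unif => s'; apply: sum_unif => q; apply: sum_unif => r'.
  exact: ht.
rewrite !mulrA -!natrM.
apply: le_trans (_ : ((8 ^ (r + s))%N)%:R * B <= _).
  by apply: ler_wpM2r => //; rewrite ler_nat; have := cnt r s; rewrite !mulnA.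
rewrite eB; have -> : (16 : R) * Rz = 8%:R * (2 * Rz) by ring.
by rewrite natrX !exprMn le_eqVlt; apply/orP; left; apply/eqP; ring.
Qed.

Lemma key_ineq (CX a M N : R) (p0 k p i q t : nat) : 0 < CX -> 1 <= a -> a <= M ->
  a <= N -> 16 * CX * M ^+ p0 * a <= N -> (0 < t)%N -> (k + p0 = p + i)%N ->
  16 * CX * M ^+ p * N ^+ q * a ^+ i * a ^+ t <= M ^+ k * N ^+ (q + t).
Proof.
move=> hC ha haM haN hN; case: t => [//|t] _ hk.
have hM : 0 < M by lra.
have hN0 : 0 < N by lra.
have ha0 : 0 <= a by lra.
suff h : M ^+ p0 * (16 * CX * M ^+ p * N ^+ q * a ^+ i * a ^+ t.+1)
    <= M ^+ p0 * (M ^+ k * N ^+ (q + t.+1)).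
  by rewrite ler_pM2l ?exprn_gt0 // in h.
have e1 : M ^+ p0 * M ^+ k = M ^+ p * M ^+ i by rewrite -!exprD; congr (_ ^+ _); lia.
have -> : M ^+ p0 * (16 * CX * M ^+ p * N ^+ q * a ^+ i * a ^+ t.+1) =
    (M ^+ p * N ^+ q) * (a ^+ i * ((16 * CX * M ^+ p0 * a) * a ^+ t)).
  by rewrite exprS; ring.
have -> : M ^+ p0 * (M ^+ k * N ^+ (q + t.+1)) = (M ^+ p * N ^+ q) * (M ^+ i * (N * N ^+ t)).
  by rewrite mulrA e1 exprD exprS; ring.
apply: ler_wpM2l; first by apply: mulr_ge0; apply: exprn_ge0; lra.
have h16 : 0 <= 16 * CX * M ^+ p0 * a.
  apply: mulr_ge0 => //; apply: mulr_ge0; [lra | apply: exprn_ge0; lra].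
apply: ler_pM; first exact: exprn_ge0.
- apply: mulr_ge0 => //; exact: exprn_ge0.
- by apply: lerXn2r; rewrite // nnegrE; lra.
apply: ler_pM => //.
- exact: exprn_ge0.
- by apply: lerXn2r; rewrite // nnegrE; lra.
Qed.

End S.

Section S2.
Variable R : realType.
Local Notation C := (R[i]).
Lemma term_bound (U X : series R) (p0 k n : nat) (RX CX M N K : R) :
  0 < CX -> 1 <= RX -> 8 * RX <= M -> 8 * RX <= N ->
  16 * CX * M ^+ p0 * (8 * RX) <= N -> 0 <= K ->
  (forall r s, nr (X r s) <= CX * RX ^+ (r + s) * (s`!)%:R) ->
  (forall q, (q < n)%N -> forall p, nr (U p q) <= K * M ^+ p * N ^+ q * (q`!)%:R) ->
  forall p s q r, (p <= k + p0)%N -> (s <= n)%N -> (q < n)%N ->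
  nr (U p q * X r s * reord R q r (k + p0 - p) (n - s)) <=
   K * M ^+ k * N ^+ n * (n`!)%:R / 2 * 2^-1 ^+ (k + p0 - p).+1 * 2^-1 ^+ s.+1
     * 2^-1 ^+ (n - q) * 2^-1 ^+ r.+1.
Proof.
move=> hCX hRX hM hN hN2 hK hXb IH p s q r hp hs hq.
have hM0 : 0 <= M by lra.
have hN0 : 0 <= N by lra.
have hh : (0 : R) <= 2^-1 by rewrite invr_ge0.
have hRHS : 0 <= K * M ^+ k * N ^+ n * (n`!)%:R / 2 * 2^-1 ^+ (k + p0 - p).+1 * 2^-1 ^+ s.+1
     * 2^-1 ^+ (n - q) * 2^-1 ^+ r.+1.
  by repeat apply: mulr_ge0 => //; apply: exprn_ge0.
have [->|/reord_supp [h1 h2 h3]] := eqVneq (reord R q r (k + p0 - p) (n - s)) 0.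
  by rewrite mulr0 nr0.
set i := (k + p0 - p)%N in h1 h2 h3 hRHS *.
set j := (n - s)%N in h1 h2 h3 hRHS *.
set t := (n - q)%N in hRHS *.
have hE : (r + s = i + t)%N by rewrite /i /j /t in h1 h2 h3 *; lia.
have hrb := @reord_bound R q r i j.
have hU := IH q hq p.
have hX := hXb r s.
rewrite !nrM.
have hKMN : 0 <= K * M ^+ p * N ^+ q.
  by apply: mulr_ge0; [apply: mulr_ge0 => //|]; apply: exprn_ge0.
have hCR : 0 <= CX * RX ^+ (r + s).
  by apply: mulr_ge0; [lra | apply: exprn_ge0; lra].
apply: le_trans (_ : (K * M ^+ p * N ^+ q * (q`!)%:R) * (CX * RX ^+ (r + s) * (s`!)%:R)
   * nr (reord R q r i j) <= _).
  apply: ler_wpM2r; first exact: nr_ge0.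
  by apply: ler_pM => //; exact: nr_ge0.
apply: le_trans (_ : (K * M ^+ p * N ^+ q) * (CX * RX ^+ (r + s)) *
    ((s`! * ('C(r, i) * j`!))%N)%:R <= _).
  have -> : (K * M ^+ p * N ^+ q * (q`!)%:R) * (CX * RX ^+ (r + s) * (s`!)%:R)
   * nr (reord R q r i j) = (K * M ^+ p * N ^+ q) * (CX * RX ^+ (r + s)) * (s`!)%:R
   * ((q`!)%:R * nr (reord R q r i j)) by ring.
  rewrite natrM [X in _ <= X]mulrA; apply: ler_wpM2l => //.
  by apply: mulr_ge0; [apply: mulr_ge0 | exact: ler0n].
apply: le_trans (_ : (K * M ^+ p * N ^+ q) * (CX * RX ^+ (r + s)) *
    ((2 ^ (r + s) * n`!)%N)%:R <= _).
  apply: ler_wpM2l; first exact: mulr_ge0.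
  rewrite ler_nat mulnCA; apply: leq_mul.
    by apply: leq_trans (bin_le2 _ _) _; apply: leq_pexp2l => //; apply: leq_addr.
  by have := fact_split s j; rewrite /j subnKC.
have ha : 1 <= 8 * RX by lra.
have ht : (0 < t)%N by rewrite /t subn_gt0.
have hki : (k + p0 = p + i)%N by rewrite /i subnKC.
have hkey := @key_ineq R CX (8 * RX) M N p0 k p i q t hCX ha hM hN hN2 ht hki.
have hqt : (q + t = n)%N by rewrite /t subnKC // ltnW.
rewrite hqt in hkey.
clearbody i j t.
have eR : K * M ^+ k * N ^+ n * (n`!)%:R / 2 * 2^-1 ^+ i.+1 * 2^-1 ^+ s.+1
     * 2^-1 ^+ t * 2^-1 ^+ r.+1 =
    (K * (n`!)%:R) * (M ^+ k * N ^+ n * 2^-1 ^+ (i + t + (i + t) + 4)).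
  have -> : (i + t + (i + t) + 4 = i.+1 + s.+1 + t + r.+1 + 1)%N.
    by clear -hE; lia.
  by rewrite !exprD expr1; ring.
rewrite eR; clear eR.
rewrite natrM natrX hE.
have -> : K * M ^+ p * N ^+ q * (CX * RX ^+ (i + t)) * (2%:R ^+ (i + t) * (n`!)%:R) =
   (K * (n`!)%:R) * (CX * M ^+ p * N ^+ q * (2%:R ^+ (i + t) * RX ^+ (i + t))) by ring.
apply: ler_wpM2l; first by apply: mulr_ge0.
apply: le_trans (_ : (16 * CX * M ^+ p * N ^+ q * (8 * RX) ^+ i * (8 * RX) ^+ t) *
   2^-1 ^+ (i + t + (i + t) + 4) <= _); last first.
  by apply: ler_wpM2r => //; apply: exprn_ge0.
rewrite le_eqVlt; apply/orP; left; apply/eqP.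
have e : forall E, (2 : R) ^+ E * RX ^+ E = (8 * RX) ^+ E * 2^-1 ^+ E * 2^-1 ^+ E.
  by move=> E; rewrite -!exprMn; congr (_ ^+ _); field.
rewrite e [(8 * RX) ^+ (i + t)]exprD [2^-1 ^+ (i + t + (i + t) + 4)]exprD.
rewrite [2^-1 ^+ (i + t + (i + t))]exprD; by field.
Qed.
End S2.

Section S3.
Variable R : realType.
Local Notation C := (R[i]).

Definition Asum (U X : series R) m n := \sum_(p < m.+1) \sum_(s < n.+1) \sum_(q < n)
  \sum_(r < (m + n).+1) U p q * X r s * reord R q r (m - p) (n - s).

Lemma smul_split (U X : series R) m n : smul U X m n = Asum U X m n +
  \sum_(p < m.+1) \sum_(s < n.+1) \sum_(r < (m + n).+1) U p n * X r s * reord R n r (m - p) (n - s).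
Proof.
rewrite /smul /Asum -big_split; apply: eq_bigr => p _; rewrite -big_split.
by apply: eq_bigr => s _; rewrite big_ord_recr.
Qed.

Lemma Bsum_eq (U X : series R) p0 m n : (p0 <= m)%N -> (forall r, X r 0%N = (r == p0)%:R) ->
  \sum_(p < m.+1) \sum_(s < n.+1) \sum_(r < (m + n).+1) U p n * X r s * reord R n r (m - p) (n - s)
  = U (m - p0)%N n.
Proof.
move=> hp hX0.
rewrite (eq_bigr (fun p : 'I_m.+1 => if nat_of_ord p == (m - p0)%N then U p n else 0)).
  by rewrite -big_mkcond (big_ord1_eq _ (fun j => U j n)) ifT // ltnS leq_subr.
move=> p _; rewrite big_ord_recl [X in _ + X]big1 ?addr0; last first.
  move=> s _; apply: big1 => r _.
  have [->|/reord_supp [_ h _]] := eqVneq (reord R n r (m - p) (n - lift ord0 s)) 0.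
    by rewrite mulr0.
  have hs := ltn_ord s; move: h; rewrite /= /bump /=; clear -hs; lia.
rewrite subn0.
rewrite (eq_bigr (fun r : 'I_(m + n).+1 => if nat_of_ord r == p0 then U p n * ((m - p)%N == p0)%:R else 0)); last first.
  by move=> r _; rewrite hX0 reord_diag; case: eqP => [->|_]; rewrite ?mulr1 ?mulr0 ?mul0r.
rewrite -big_mkcond (big_ord1_eq _ (fun _ => U p n * ((m - p)%N == p0)%:R)) ifT; last by rewrite ltnS; clear -hp; lia.
have hpm : (p <= m)%N by rewrite -ltnS.
case: eqP => [hpe|hpe]; case: eqP => [hpe'|hpe']; rewrite ?mulr1 ?mulr0 //; clear -hpe hpe' hpm hp; lia.
Qed.
End S3.

Section S4.
Variable R : realType.
Local Notation C := (R[i]).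

Lemma main_div (U X : series R) p0 (RX CX : R) : 1 <= RX -> 0 < CX ->
  (forall r, X r 0%N = (r == p0)%:R) ->
  (forall r s, nr (X r s) <= CX * RX ^+ (r + s) * (s`!)%:R) ->
  conv (smul U X) -> conv U.
Proof.
move=> hRX hCX hX0 hXb /conv_nr [RY [hRY [CY [hCY hY]]]].
apply/conv_nr.
pose a := 8 * RX.
pose M := Num.max a RY.
pose N := Num.max M (16 * CX * M ^+ p0 * a).
pose K := 2 * CY * RY ^+ p0.
have haM : a <= M by rewrite le_max lexx.
have hRYM : RY <= M by rewrite le_max lexx orbT.
have hMN : M <= N by rewrite le_max lexx.
have hN2 : 16 * CX * M ^+ p0 * a <= N by rewrite le_max lexx orbT.
have ha : 8 <= a by rewrite /a; lra.
have haN : a <= N by lra.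
have hK : 0 < K by rewrite /K; apply: mulr_gt0; [lra | apply: exprn_gt0; lra].
have hM0 : 0 <= M by lra.
have hN0 : 0 <= N by lra.
have claim : forall n k, nr (U k n) <= K * M ^+ k * N ^+ n * (n`!)%:R.
  elim/ltn_ind => n IH k.
  have e := smul_split U X (k + p0) n.
  rewrite (@Bsum_eq R U X p0 (k + p0) n (leq_addl _ _) hX0) addnK in e.
  have hT : 0 <= K * M ^+ k * N ^+ n * (n`!)%:R.
    by repeat apply: mulr_ge0; rewrite ?ler0n //; try apply: exprn_ge0; lra.
  have hh : (0 : R) <= 2^-1 by rewrite invr_ge0.
  have hA : nr (Asum U X (k + p0) n) <= K * M ^+ k * N ^+ n * (n`!)%:R / 2.
    rewrite /Asum.
    apply: (sum_w (e := fun p : 'I_(k + p0).+1 => 2^-1 ^+ ((k + p0) - p).+1)).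
    - by apply: mulr_ge0.
    - by move=> i; apply: exprn_ge0.
    - exact: geo2.
    move=> p.
    apply: (sum_w (e := fun s : 'I_n.+1 => 2^-1 ^+ s.+1)).
    - by repeat apply: mulr_ge0 => //; apply: exprn_ge0.
    - by move=> i; apply: exprn_ge0.
    - exact: geo1.
    move=> s.
    apply: (sum_w (e := fun q : 'I_n => 2^-1 ^+ (n - q))).
    - by repeat apply: mulr_ge0 => //; apply: exprn_ge0.
    - by move=> i; apply: exprn_ge0.
    - exact: geo3.
    move=> q.
    apply: (sum_w (e := fun r : 'I_(k + p0 + n).+1 => 2^-1 ^+ r.+1)).
    - by repeat apply: mulr_ge0 => //; apply: exprn_ge0.
    - by move=> i; apply: exprn_ge0.
    - exact: geo1.
    move=> r.
    have haM' : 8 * RX <= M := haM.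
    have haN' : 8 * RX <= N := haN.
    have hN2' : 16 * CX * M ^+ p0 * (8 * RX) <= N := hN2.
    apply: (@term_bound R U X p0 k n RX CX M N K hCX hRX haM' haN' hN2' (ltW hK) hXb).
    - by move=> q' hq' p'; apply: IH.
    - by rewrite -ltnS.
    - by rewrite -ltnS.
    - by [].
  have hYb : nr (smul U X (k + p0) n) <= K * M ^+ k * N ^+ n * (n`!)%:R / 2.
    apply: le_trans (hY _ _) _.
    have e1 : RY ^+ (k + p0 + n) = RY ^+ p0 * (RY ^+ k * RY ^+ n) by rewrite !exprD; ring.
    rewrite e1 /K.
    have hRY0 : 0 <= RY by lra.
    apply: le_trans (_ : CY * RY ^+ p0 * (M ^+ k * N ^+ n) * (n`!)%:R <= _).
      rewrite mulrA; apply: ler_pM; [|exact: ler0n| |by []].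
      + apply: mulr_ge0; [apply: mulr_ge0; [lra|exact: exprn_ge0]|].
        by apply: mulr_ge0; apply: exprn_ge0.
      apply: ler_pM; [apply: mulr_ge0; [lra|exact: exprn_ge0] | |by []|].
        by apply: mulr_ge0; apply: exprn_ge0.
      apply: ler_pM; [exact: exprn_ge0 | exact: exprn_ge0 | |];
        apply: lerXn2r; rewrite ?nnegrE; lra.
    by rewrite le_eqVlt; apply/orP; left; apply/eqP; field.
  have -> : U k n = smul U X (k + p0) n - Asum U X (k + p0) n by rewrite e; ring.
  apply: le_trans (nrB _ _) _; lra.
exists N; split; first lra.
exists K; split => // p q.
apply: le_trans (claim q p) _.
rewrite exprD.
have hMp : M ^+ p <= N ^+ p by apply: lerXn2r; rewrite // nnegrE.
have hX : 0 <= N ^+ q * (q`!)%:R by apply: mulr_ge0; [apply: exprn_ge0 | exact: ler0n].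
have -> : K * (N ^+ p * N ^+ q) * (q`!)%:R = K * N ^+ p * (N ^+ q * (q`!)%:R) by ring.
have -> : K * M ^+ p * N ^+ q * (q`!)%:R = K * M ^+ p * (N ^+ q * (q`!)%:R) by ring.
apply: ler_pM => //; first by apply: mulr_ge0; [lra | apply: exprn_ge0].
apply: ler_pM => //; [lra | exact: exprn_ge0].
Qed.
End S4.

Theorem proposition1p4p2 (R : realType) (p0 : nat) (z U : series R) :
  conv z ->
  conv (smul U (sadd (mono R p0 0) (smul (mono R 0 1) z))) ->
  conv U.
Proof.
move=> /conv_nr [Rz [hRz [Cz [hCz hz]]]] hY.
apply: (@main_div R U _ p0 (16 * Rz) (1 + Cz)) hY.
- lra.
- lra.
- by move=> r; rewrite /sadd W0 addr0 /mono andbT.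
move=> r s; rewrite /sadd.
apply: le_trans (nrD _ _) _.
have hW := @Wbound R z Rz Cz (ltW hRz) (ltW hCz) hz r s.
have hm : nr (mono R p0 0 r s) <= 1 by rewrite /mono nrn; case: (_ && _).
have hP : 1 <= (16 * Rz) ^+ (r + s) * (s`!)%:R.
  apply: mulr_ege1; first by apply: exprn_ege1; lra.
  by rewrite ler1n fact_gt0.
rewrite -mulrA mulrDl mul1r; apply: lerD; first exact: le_trans hm hP.
by rewrite mulrA.
Qed.
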